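(* Let $n=3$ and let $d=(d_1,d_2,d_3)$ satisfy $d_1\ge d_2\ge d_3\ge 0$ and $d_1+d_2+d_3=1$. Then $\min_\chi\|d-\mathcal{SS}(\chi)\|_1\le\tfrac13$, the minimum ranging over all weighted voting games $\chi$ on $N=\{1,2,3\}$, and equality holds if and only if $d$ lies in one of the following sets: (i) $d_1=\tfrac56$, $\tfrac1{12}\le d_2\le\tfrac16$; (ii) $\tfrac23\le d_1\le\tfrac56$, $d_1+d_2=1$ (i.e. $d_3=0$); (iii) $\tfrac12\le d_1\le\tfrac23$, $d_2=\tfrac13$; (iv) $d_1=\tfrac12$, $\tfrac14\le d_2\le\tfrac13$; (v) $\tfrac5{12}\le d_1\le\tfrac12$, $d_1+d_2=\tfrac56$ (i.e. $d_3=\tfrac16$).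
   Context: A simple game on $N=\{1,\dots,n\}$ is a monotone Boolean function $\chi:2^N\to\{0,1\}$ with $\chi(\emptyset)=0$, $\chi(N)=1$; it is a weighted voting game if there are weights $w_i\ge0$ and a quota $q$ with $\chi(U)=1\iff\sum_{i\in U}w_i\ge q$. An $i$-swing is a set $U\subseteq N\setminus\{i\}$ with $\chi(U)=0$, $\chi(U\cup\{i\})=1$. Shapley–Shubik index: $\mathcal{SS}(\chi,i)=\frac1{n!}\sum_{U\text{ an }i\text{-swing}}|U|!(n-|U|-1)!$, and $\mathcal{SS}(\chi)=(\mathcal{SS}(\chi,1),\dots,\mathcal{SS}(\chi,n))$. For $n=3$, up to permutation of voters, the achievable Shapley–Shubik vectors are $(1,0,0)$, $(\tfrac23,\tfrac16,\tfrac16)$, $(\tfrac12,\tfrac12,0)$, $(\tfrac13,\tfrac13,\tfrac13)$. *)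

(* Defs.v *)
From HB Require Import structures.
From mathcomp Require Import all_boot all_order all_algebra.
Set Implicit Arguments. Unset Strict Implicit. Unset Printing Implicit Defensive.
Import Order.TTheory GRing.Theory Num.Theory.
Local Open Scope ring_scope.

(* Voters N = {1,...,n} are represented by 'I_n (voter k+1 is ordinal k).
   A game is a function chi : {set 'I_n} -> bool. *)

Definition simple_game (n : nat) (chi : {set 'I_n} -> bool) : Prop :=
  [/\ (forall U V : {set 'I_n}, U \subset V -> chi U -> chi V),
      chi set0 = false & chi setT = true].

Definition weighted_voting_game (R : realFieldType) (n : nat)
    (chi : {set 'I_n} -> bool) : Prop :=
  simple_game chi /\
  exists (w : 'I_n -> R) (q : R),
    (forall i, 0 <= w i) /\
    (forall U : {set 'I_n}, chi U = (q <= \sum_(i in U) w i)).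

Definition swing (n : nat) (chi : {set 'I_n} -> bool) (i : 'I_n) (U : {set 'I_n}) : bool :=
  [&& i \notin U, ~~ chi U & chi (i |: U)].

Definition SS (R : realFieldType) (n : nat) (chi : {set 'I_n} -> bool) (i : 'I_n) : R :=
  (n`!%:R)^-1 * \sum_(U : {set 'I_n} | swing chi i U) ((#|U|`! * (n - #|U| - 1)`!)%N)%:R.

Definition dist1 (R : realFieldType) (n : nat) (d : 'I_n -> R) (chi : {set 'I_n} -> bool) : R :=
  \sum_(i < n) `|d i - SS R chi i|.

Definition v1 : 'I_3 := @Ordinal 3 0 isT.
Definition v2 : 'I_3 := @Ordinal 3 1 isT.
Definition v3 : 'I_3 := @Ordinal 3 2 isT.

Definition equality_region (R : realFieldType) (d : 'I_3 -> R) : Prop :=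
  let d1 := d v1 in let d2 := d v2 in
     (d1 = 5%:R / 6%:R /\ (1 / 12%:R <= d2 <= 1 / 6%:R)) \/
      ((2%:R / 3%:R <= d1 <= 5%:R / 6%:R) /\ d1 + d2 = 1) \/
      ((1 / 2%:R <= d1 <= 2%:R / 3%:R) /\ d2 = 1 / 3%:R) \/
      (d1 = 1 / 2%:R /\ (1 / 4%:R <= d2 <= 1 / 3%:R)) \/
      ((5%:R / 12%:R <= d1 <= 1 / 2%:R) /\ d1 + d2 = 5%:R / 6%:R).

(* Main.v *)
Require Import Defs.
From HB Require Import structures.
From mathcomp Require Import all_boot all_order all_algebra.
From mathcomp Require Import ring lra zify.
Import Order.TTheory GRing.Theory Num.Theory.
Local Open Scope ring_scope.
Set Implicit Arguments. Unset Strict Implicit.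
Lemma ord3P (i : 'I_3) : [\/ i = v1, i = v2 | i = v3].
Proof.
case: i => [[|[|[|m]]] hm].
- by apply: Or31; apply: val_inj.
- by apply: Or32; apply: val_inj.
- by apply: Or33; apply: val_inj.
- by [].
Qed.

Definition sets3 : seq {set 'I_3} :=
  [:: set0; [set v1]; [set v2]; [set v3]; [set v1; v2]; [set v1; v3]; [set v2; v3]; setT].

Definition g3 (U : {set 'I_3}) := (v1 \in U, v2 \in U, v3 \in U).

Lemma sets3_uniq : uniq sets3.
Proof. apply: (@map_uniq _ _ g3). by rewrite /= /g3 !inE. Qed.

Lemma sets3_all U : U \in sets3.
Proof.
have hU : forall V : {set 'I_3}, g3 V = g3 U -> V = U.
  move=> V; rewrite /g3 => [[h1 h2 h3]]; apply/setP => i.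
  by have [->|->|->] := ord3P i.
have : g3 U \in map g3 sets3.
  rewrite /g3; case: (v1 \in U); case: (v2 \in U); case: (v3 \in U);
  by rewrite /= !inE.
by case/mapP => V hV /esym /hU <-.
Qed.

Lemma sum_sets3 (V : nmodType) (F : {set 'I_3} -> V) :
  \sum_(U : {set 'I_3}) F U = \sum_(U <- sets3) F U.
Proof.
apply: perm_big; apply: uniq_perm; first exact: index_enum_uniq.
  exact: sets3_uniq.
by move=> U; rewrite mem_index_enum sets3_all.
Qed.

Lemma SSE (R : realFieldType) (chi : {set 'I_3} -> bool) i :
  SS R chi i = 6%:R^-1 * \sum_(U <- sets3) (if swing chi i U then ((#|U|`! * (3 - #|U| - 1)`!)%N)%:R else 0).
Proof. by rewrite /SS big_mkcond /= sum_sets3. Qed.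


Ltac setsolve := apply/setP => i; have [->|->|->] := ord3P i; by rewrite !inE.
Lemma sU1 : v1 |: [set v2; v3] = setT. Proof. setsolve. Qed.
Lemma sU2 : v2 |: [set v1; v3] = setT. Proof. setsolve. Qed.
Lemma sU3 : v3 |: [set v1; v2] = setT. Proof. setsolve. Qed.
Lemma sU21 : v2 |: [set v1] = [set v1; v2]. Proof. setsolve. Qed.
Lemma sU31 : v3 |: [set v1] = [set v1; v3]. Proof. setsolve. Qed.
Lemma sU32 : v3 |: [set v2] = [set v2; v3]. Proof. setsolve. Qed.
Lemma c2 (a b : 'I_3) : a != b -> #|[set a; b]| = 2%N. Proof. by move=> h; rewrite cards2 h. Qed.
Lemma cT : #|[set: 'I_3]| = 3%N. Proof. by rewrite cardsT card_ord. Qed.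

Definition ssv (b1 b2 b3 b12 b13 b23 : bool) : nat * nat * nat :=
  ((2 * b1 + (~~b2 && b12) + (~~b3 && b13) + 2 * ~~b23)%N,
   (2 * b2 + (~~b1 && b12) + (~~b3 && b23) + 2 * ~~b13)%N,
   (2 * b3 + (~~b1 && b13) + (~~b2 && b23) + 2 * ~~b12)%N).

Lemma SS_vals (R : realFieldType) (chi : {set 'I_3} -> bool) : chi set0 = false -> chi setT = true ->
  let s := ssv (chi [set v1]) (chi [set v2]) (chi [set v3]) (chi [set v1; v2]) (chi [set v1; v3]) (chi [set v2; v3]) in
  [/\ SS R chi v1 = s.1.1%:R / 6%:R, SS R chi v2 = s.1.2%:R / 6%:R & SS R chi v3 = s.2%:R / 6%:R].
Proof.
move=> h0 hT /=.
rewrite !SSE /sets3 !big_cons !big_nil /swing !inE /= !setU0 sU1 sU2 sU3 sU21 sU31 sU32 hT h0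
  cards0 !cards1 !c2 // ?cT /=.
case: (chi [set v1]); case: (chi [set v2]); case: (chi [set v3]);
case: (chi [set v1; v2]); case: (chi [set v1; v3]); case: (chi [set v2; v3]);
split; rewrite /= ?addr0 ?add0r -?natrD mulrC //.
Qed.
Lemma absP (R : realFieldType) (t : R) : (0 <= t /\ `|t| = t) \/ (t < 0 /\ `|t| = - t).
Proof. by case: (lerP 0 t) => h; [left; rewrite ger0_norm | right; rewrite ltr0_norm]. Qed.

Arguments absP {R}.
Ltac split_abs := repeat match goal with |- context[`|?t|] =>
  first [ rewrite (@ger0_norm _ t); [|lra] | rewrite (@ler0_norm _ t); [|lra] |
  let h := fresh "h" in let e := fresh "e" in
  case: (absP t) => [[h e]|[h e]]; rewrite e; clear e] end.
Ltac fin := repeat match goal with H : context[`|_|] |- _ => revert H end; split_abs; intros; lra.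
Ltac lraeq := apply/eqP; rewrite eq_le; apply/andP; split; lra.
Ltac fineq := apply/eqP; rewrite eq_le; apply/andP; split; fin.

Definition D (R : realFieldType) (x y z : R) (a b c : nat) :=
  `|x - a%:R/6%:R| + `|y - b%:R/6%:R| + `|z - c%:R/6%:R|.

Arguments D {R}.

Lemma R1 (R : realFieldType) (x y z : R) (h12 : y <= x) (h23 : z <= y) (h3 : 0 <= z) (hs : x + y + z = 1) :
  D x y z 6 0 0 <= 1/3%:R \/ D x y z 4 1 1 <= 1/3%:R \/ D x y z 3 3 0 <= 1/3%:R \/ D x y z 2 2 2 <= 1/3%:R.
Proof.
rewrite /D.
have [hx|hx] := lerP x (1/2%:R).
  have [hz|hz] := lerP z (1/6%:R).
    by right; right; left; split_abs; lra.
  by right; right; right; split_abs; lra.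
have [hy|hy] := lerP (1/3%:R) y.
  by right; right; left; split_abs; lra.
have [hx'|hx'] := lerP (5%:R/6%:R) x.
  by left; split_abs; lra.
by right; left; split_abs; lra.
Qed.

Definition region (R : realFieldType) (d1 d2 : R) : Prop :=
     (d1 = 5%:R / 6%:R /\ (1 / 12%:R <= d2 <= 1 / 6%:R)) \/
      ((2%:R / 3%:R <= d1 <= 5%:R / 6%:R) /\ d1 + d2 = 1) \/
      ((1 / 2%:R <= d1 <= 2%:R / 3%:R) /\ d2 = 1 / 3%:R) \/
      (d1 = 1 / 2%:R /\ (1 / 4%:R <= d2 <= 1 / 3%:R)) \/
      ((5%:R / 12%:R <= d1 <= 1 / 2%:R) /\ d1 + d2 = 5%:R / 6%:R).

Arguments region {R}.

Lemma Dsimp (R : realFieldType) (x y z : R) (h12 : y <= x) (h23 : z <= y) (h3 : 0 <= z) (hs : x + y + z = 1) :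
  [/\ D x y z 6 0 0 = 2%:R - 2%:R * x,
      D x y z 3 3 0 = `|x - 3%:R/6%:R| + (1/2%:R - y) + z
    & D x y z 2 2 2 = x - 1/3%:R + `|y - 2%:R/6%:R| + (1/3%:R - z)].
Proof.
rewrite /D; split.
- rewrite (@ler0_norm _ (x - _)); last lra.
  rewrite (@ger0_norm _ (y - _)); last lra.
  rewrite (@ger0_norm _ (z - _)); last lra.
  lra.
- rewrite (@ler0_norm _ (y - _)); last lra.
  rewrite (@ger0_norm _ (z - _)); last lra.
  lra.
- rewrite (@ger0_norm _ (x - _)); last lra.
  rewrite (@ler0_norm _ (z - _)); last lra.
  lra.
Qed.

Lemma R2 (R : realFieldType) (x y z : R) (h12 : y <= x) (h23 : z <= y) (h3 : 0 <= z) (hs : x + y + z = 1) :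
  1/3%:R <= D x y z 6 0 0 -> 1/3%:R <= D x y z 4 1 1 -> 1/3%:R <= D x y z 3 3 0 -> 1/3%:R <= D x y z 2 2 2 ->
  region x y.
Proof.
have [-> -> ->] := Dsimp h12 h23 h3 hs.
rewrite {1}/D /region => ha hb hc hd.
have [hx|hx] := ltrP x (1/2%:R).
  by do 4 right; split; [apply/andP; split|]; [clear ha hb; fin|lra|clear ha hb; fineq].
have [hx2|hx2] := lerP x (1/2%:R).
  by do 3 right; left; split; [|apply/andP; split]; [lraeq|lra|clear ha hb; fin].
have [hx3|hx3] := lerP x (2%:R/3%:R).
  by do 2 right; left; split; [apply/andP; split|]; [lra|lra|clear ha; fineq].
have [hx4|hx4] := ltrP x (5%:R/6%:R).
  by right; left; split; [apply/andP; split|]; [lra|clear hc hd; fin|clear hc hd; fineq].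
by left; split; [|apply/andP; split]; [lraeq|lra|lra].
Qed.

Lemma R3 (R : realFieldType) (x y z : R) (h12 : y <= x) (h23 : z <= y) (h3 : 0 <= z) (hs : x + y + z = 1) :
  region x y ->
  [/\ 1/3%:R <= D x y z 6 0 0, 1/3%:R <= D x y z 4 1 1, 1/3%:R <= D x y z 3 3 0 & 1/3%:R <= D x y z 2 2 2].
Proof.
have [-> -> ->] := Dsimp h12 h23 h3 hs.
rewrite /D /region.
case=> [[h1 /andP[h2 h2']]|[[/andP[h1 h1'] h2]|[[/andP[h1 h1'] h2]|[[h1 /andP[h2 h2']]|[/andP[h1 h1'] h2]]]]];
  split; fin.
Qed.

Lemma R4 (R : realFieldType) (x y z : R) (h12 : y <= x) (h23 : z <= y) (h3 : 0 <= z) (hs : x + y + z = 1) :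
  (D x y z 6 0 0 <= D x y z 0 6 0 /\ D x y z 6 0 0 <= D x y z 0 0 6) /\
  (D x y z 4 1 1 <= D x y z 1 4 1 /\ D x y z 4 1 1 <= D x y z 1 1 4) /\
  (D x y z 3 3 0 <= D x y z 3 0 3 /\ D x y z 3 3 0 <= D x y z 0 3 3).
Proof. rewrite /D; (repeat split); fin. Qed.

Lemma sum_ord3 (V : nmodType) (F : 'I_3 -> V) : \sum_(i : 'I_3) F i = F v1 + F v2 + F v3.
Proof.
rewrite (@perm_big _ _ _ _ _ [:: v1; v2; v3]); last first.
  apply: uniq_perm; first exact: index_enum_uniq. by [].
  by move=> i; rewrite mem_index_enum !inE; have [->|->|->] := ord3P i.
by rewrite !big_cons big_nil /= addr0 addrA.
Qed.

Lemma sum_in3 (wn : 'I_3 -> nat) (U : {set 'I_3}) :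
  (\sum_(i in U) wn i = (v1 \in U) * wn v1 + (v2 \in U) * wn v2 + (v3 \in U) * wn v3)%N.
Proof.
rewrite big_mkcond /= (sum_ord3 (fun i => if i \in U then wn i else 0%N)).
by case: (v1 \in U); case: (v2 \in U); case: (v3 \in U); rewrite /= ?mul1n ?mul0n.
Qed.

Lemma wvg_nat (R : realFieldType) (chi : {set 'I_3} -> bool) (wn : 'I_3 -> nat) (q : nat) :
  (forall U, chi U = (q <= \sum_(i in U) wn i)%N) -> (0 < q)%N -> (q <= wn v1 + wn v2 + wn v3)%N ->
  weighted_voting_game R chi.
Proof.
move=> hchi hq hT; split; last first.
  exists (fun i => (wn i)%:R), q%:R; split=> [i|U]; first exact: ler0n.
  by rewrite hchi -natr_sum ler_nat.
split.
- move=> U V /subsetP s; rewrite !hchi !sum_in3.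
  have s1 := s v1; have s2 := s v2; have s3 := s v3.
  move: s1 s2 s3.
  case: (v1 \in U); case: (v2 \in U); case: (v3 \in U);
  case: (v1 \in V); case: (v2 \in V); case: (v3 \in V); move=> s1 s2 s3;
  rewrite /= ?mul1n ?mul0n; try (by have := s1 isT); try (by have := s2 isT); try (by have := s3 isT);
  move=> h; lia.
- by rewrite hchi sum_in3 !inE /= !mul0n; apply/negbTE; rewrite -ltnNge; lia.
- by rewrite hchi sum_in3 !inE /= !mul1n.
Qed.

Definition tlist : seq (nat * nat * nat) :=
  [:: (6,0,0); (0,6,0); (0,0,6); (4,1,1); (1,4,1); (1,1,4); (3,3,0); (3,0,3); (0,3,3); (2,2,2)]%N.

Lemma ssv_mem (b1 b2 b3 b12 b13 b23 : bool) :
  [&& b1 ==> b12, b1 ==> b13, b2 ==> b12, b2 ==> b23, b3 ==> b13 & b3 ==> b23] ->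
  ssv b1 b2 b3 b12 b13 b23 \in tlist.
Proof.
by case: b1; case: b2; case: b3; case: b12; case: b13; case: b23.
Qed.

Lemma dist1E (R : realFieldType) (d : 'I_3 -> R) chi :
  dist1 d chi = `|d v1 - SS R chi v1| + `|d v2 - SS R chi v2| + `|d v3 - SS R chi v3|.
Proof. by rewrite /dist1 (sum_ord3 (fun i => `|d i - SS R chi i|)). Qed.

Lemma sub12 : [set v1] \subset [set v1; v2]. Proof. by apply/subsetP => i; rewrite !inE => ->. Qed.
Lemma sub13 : [set v1] \subset [set v1; v3]. Proof. by apply/subsetP => i; rewrite !inE => ->. Qed.
Lemma sub21 : [set v2] \subset [set v1; v2]. Proof. by apply/subsetP => i; rewrite !inE => ->; rewrite orbT. Qed.
Lemma sub23 : [set v2] \subset [set v2; v3]. Proof. by apply/subsetP => i; rewrite !inE => ->. Qed.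
Lemma sub31 : [set v3] \subset [set v1; v3]. Proof. by apply/subsetP => i; rewrite !inE => ->; rewrite orbT. Qed.
Lemma sub32 : [set v3] \subset [set v2; v3]. Proof. by apply/subsetP => i; rewrite !inE => ->; rewrite orbT. Qed.

Lemma dist_cases (R : realFieldType) (d : 'I_3 -> R) chi : simple_game chi ->
  exists2 t, t \in tlist & dist1 d chi = D (d v1) (d v2) (d v3) t.1.1 t.1.2 t.2.
Proof.
case=> hm h0 hT.
have [e1 e2 e3] := SS_vals R h0 hT.
have i1 : chi [set v1] ==> chi [set v1; v2] by apply/implyP; apply: hm; exact: sub12.
have i2 : chi [set v1] ==> chi [set v1; v3] by apply/implyP; apply: hm; exact: sub13.
have i3 : chi [set v2] ==> chi [set v1; v2] by apply/implyP; apply: hm; exact: sub21.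
have i4 : chi [set v2] ==> chi [set v2; v3] by apply/implyP; apply: hm; exact: sub23.
have i5 : chi [set v3] ==> chi [set v1; v3] by apply/implyP; apply: hm; exact: sub31.
have i6 : chi [set v3] ==> chi [set v2; v3] by apply/implyP; apply: hm; exact: sub32.
exists (ssv (chi [set v1]) (chi [set v2]) (chi [set v3]) (chi [set v1; v2]) (chi [set v1; v3]) (chi [set v2; v3])).
  by apply: ssv_mem; rewrite i1 i2 i3 i4 i5 i6.
by rewrite dist1E e1 e2 e3.
Qed.

Lemma lower (R : realFieldType) (x y z : R) (h12 : y <= x) (h23 : z <= y) (h3 : 0 <= z) (hs : x + y + z = 1) m :
  m <= D x y z 6 0 0 -> m <= D x y z 4 1 1 -> m <= D x y z 3 3 0 -> m <= D x y z 2 2 2 ->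
  forall t, t \in tlist -> m <= D x y z t.1.1 t.1.2 t.2.
Proof.
have [[p1 p2] [[p3 p4] [p5 p6]]] := R4 h12 h23 h3 hs.
move=> ha hb hc hd t; rewrite /tlist !inE.
repeat (case/orP; [move/eqP->; rewrite /=; try done|]); last by move/eqP->.
all: first [exact: le_trans ha p1 | exact: le_trans ha p2 | exact: le_trans hb p3
  | exact: le_trans hb p4 | exact: le_trans hc p5 | exact: le_trans hc p6].
Qed.

Lemma pick4 (R : realFieldType) (a b c e : R) :
  (a <= b /\ a <= c /\ a <= e) \/ (b <= a /\ b <= c /\ b <= e) \/
  (c <= a /\ c <= b /\ c <= e) \/ (e <= a /\ e <= b /\ e <= c).
Proof.
have [h1|h1] := lerP a b; have [h2|h2] := lerP a c; have [h3|h3] := lerP a e;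
have [h4|h4] := lerP b c; have [h5|h5] := lerP b e; have [h6|h6] := lerP c e;
first [ left; (repeat split); lra | right; left; (repeat split); lra
      | right; right; left; (repeat split); lra | right; right; right; (repeat split); lra ].
Qed.

Lemma finish (R : realFieldType) (d : 'I_3 -> R)
    (h12 : d v2 <= d v1) (h23 : d v3 <= d v2) (h3 : 0 <= d v3)
    (hsum : d v1 + d v2 + d v3 = 1) chi0 :
  weighted_voting_game R chi0 ->
  let x := d v1 in let y := d v2 in let z := d v3 in let m := dist1 d chi0 in
  m <= D x y z 6 0 0 -> m <= D x y z 4 1 1 -> m <= D x y z 3 3 0 -> m <= D x y z 2 2 2 ->
  (m = D x y z 6 0 0 \/ m = D x y z 4 1 1 \/ m = D x y z 3 3 0 \/ m = D x y z 2 2 2) ->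
  [/\ weighted_voting_game R chi0,
        (forall chi, weighted_voting_game R chi -> dist1 d chi0 <= dist1 d chi),
        dist1 d chi0 <= 1 / 3%:R
      & (dist1 d chi0 = 1 / 3%:R <-> equality_region d)].
Proof.
move=> hw x y z m ha hb hc hd hm.
have hle : m <= 1 / 3%:R.
  have := R1 h12 h23 h3 hsum.
  case=> [h|[h|[h|h]]]; apply: le_trans h; assumption.
split => //.
- move=> chi [hs _]; have [t ht ->] := dist_cases d hs.
  exact: (lower h12 h23 h3 hsum ha hb hc hd).
- split.
  + move=> he. rewrite /equality_region.
    apply: (R2 h12 h23 h3 hsum); rewrite -/x -/y -/z -he; assumption.
  + move=> hr; have [ra rb rc rd] := R3 h12 h23 h3 hsum hr.
    apply/eqP; rewrite -/m eq_le hle /=.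
    by case: hm => [->|[->|[->|->]]].
Qed.

Definition ga (U : {set 'I_3}) := v1 \in U.
Definition gb (U : {set 'I_3}) := (v1 \in U) && ((v2 \in U) || (v3 \in U)).
Definition gc (U : {set 'I_3}) := (v1 \in U) && (v2 \in U).
Definition gd (U : {set 'I_3}) := [|| v1 \in U, v2 \in U | v3 \in U].

Definition wnat (a b c : nat) (i : 'I_3) : nat :=
  if i == v1 then a else if i == v2 then b else c.

Lemma wa (R : realFieldType) : weighted_voting_game R ga.
Proof.
apply: (@wvg_nat R ga (wnat 1 0 0) 1) => // U.
rewrite sum_in3 /ga /wnat /=.
by case: (v1 \in U); case: (v2 \in U); case: (v3 \in U).
Qed.
Lemma wb (R : realFieldType) : weighted_voting_game R gb.
Proof.
apply: (@wvg_nat R gb (wnat 2 1 1) 3) => // U.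
rewrite sum_in3 /gb /wnat /=.
by case: (v1 \in U); case: (v2 \in U); case: (v3 \in U).
Qed.
Lemma wc (R : realFieldType) : weighted_voting_game R gc.
Proof.
apply: (@wvg_nat R gc (wnat 1 1 0) 2) => // U.
rewrite sum_in3 /gc /wnat /=.
by case: (v1 \in U); case: (v2 \in U); case: (v3 \in U).
Qed.
Lemma wd (R : realFieldType) : weighted_voting_game R gd.
Proof.
apply: (@wvg_nat R gd (wnat 1 1 1) 1) => // U.
rewrite sum_in3 /gd /wnat /=.
by case: (v1 \in U); case: (v2 \in U); case: (v3 \in U).
Qed.

Lemma dga (R : realFieldType) (d : 'I_3 -> R) : dist1 d ga = D (d v1) (d v2) (d v3) 6 0 0.
Proof.
have h0 : ga set0 = false by rewrite /ga !inE.
have hT : ga setT = true by rewrite /ga !inE.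
have [e1 e2 e3] := SS_vals R h0 hT.
by rewrite dist1E e1 e2 e3 /ga !inE.
Qed.
Lemma dgb (R : realFieldType) (d : 'I_3 -> R) : dist1 d gb = D (d v1) (d v2) (d v3) 4 1 1.
Proof.
have h0 : gb set0 = false by rewrite /gb !inE.
have hT : gb setT = true by rewrite /gb !inE.
have [e1 e2 e3] := SS_vals R h0 hT.
by rewrite dist1E e1 e2 e3 /gb !inE.
Qed.
Lemma dgc (R : realFieldType) (d : 'I_3 -> R) : dist1 d gc = D (d v1) (d v2) (d v3) 3 3 0.
Proof.
have h0 : gc set0 = false by rewrite /gc !inE.
have hT : gc setT = true by rewrite /gc !inE.
have [e1 e2 e3] := SS_vals R h0 hT.
by rewrite dist1E e1 e2 e3 /gc !inE.
Qed.
Lemma dgd (R : realFieldType) (d : 'I_3 -> R) : dist1 d gd = D (d v1) (d v2) (d v3) 2 2 2.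
Proof.
have h0 : gd set0 = false by rewrite /gd !inE.
have hT : gd setT = true by rewrite /gd !inE.
have [e1 e2 e3] := SS_vals R h0 hT.
by rewrite dist1E e1 e2 e3 /gd !inE.
Qed.

Unset Implicit Arguments.
Theorem mainTheorem3 (R : realFieldType) (d : 'I_3 -> R)
    (h12 : d v2 <= d v1) (h23 : d v3 <= d v2) (h3 : 0 <= d v3)
    (hsum : d v1 + d v2 + d v3 = 1) :
  exists chi0 : {set 'I_3} -> bool,
    [/\ weighted_voting_game R chi0,
        (forall chi, weighted_voting_game R chi -> dist1 d chi0 <= dist1 d chi),
        dist1 d chi0 <= 1 / 3%:R
      & (dist1 d chi0 = 1 / 3%:R <-> equality_region d)].
Proof.
have := pick4 (D (d v1) (d v2) (d v3) 6 0 0) (D (d v1) (d v2) (d v3) 4 1 1)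
              (D (d v1) (d v2) (d v3) 3 3 0) (D (d v1) (d v2) (d v3) 2 2 2).
case=> [[p1 [p2 p3]]|[[p1 [p2 p3]]|[[p1 [p2 p3]]|[p1 [p2 p3]]]]].
- exists ga; apply: finish => //; rewrite ?dga //; [exact: wa | by left].
- exists gb; apply: finish => //; rewrite ?dgb //; [exact: wb | by right; left].
- exists gc; apply: finish => //; rewrite ?dgc //; [exact: wc | by right; right; left].
- exists gd; apply: finish => //; rewrite ?dgd //; [exact: wd | by right; right; right].
Qed.
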